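(* Let $E$ be a connected graded Frobenius algebra with top degree $l$, $\mathfrak e$ a basis of $E_l$, $\{a_1,\dots,a_n\}$ a basis of $E_1$, $\{b_i\}$ the basis of $E_{l-1}$ with $a_ib_j=\delta_{ij}\mathfrak e$, $\{c_i\}$ the basis of $E_1$ with $b_ic_j=\delta_{ij}\mathfrak e$, and $\alpha=(\alpha_{ij})$ the invertible matrix with $c_i=\sum_j\alpha_{ij}a_j$. Let $K$ be a Hopf algebra with antipode $S$ such that $E$ is a left $K$-comodule algebra via a grading-preserving coaction $\rho$, and write $\rho(a_i)=\sum_s y_{is}\otimes a_s$, $\rho(b_i)=\sum_s f_{is}\otimes b_s$, $\rho(c_i)=\sum_s g_{is}\otimes c_s$, $\rho(\mathfrak e)={\sf D}\otimes\mathfrak e$. Let $\mathbb Y=(y_{ij})$, $\mathbb F=(f_{ij})$, $\mathbb G=(g_{ij})$, and $\mathbb I$ the $n\times n$ identity matrix. Then: (a) $\mathbb YS(\mathbb Y)=\mathbb I=S(\mathbb Y)\mathbb Y$; (b) $\mathbb GS(\mathbb G)=\mathbb I=S(\mathbb G)\mathbb G$; (c) $\mathbb Y\mathbb F^\tau={\sf D}\mathbb I$, and consequently $S(\mathbb Y)=\mathbb F^\tau({\sf D}^{-1}\mathbb I)$; (d) $S(\mathbb F)S(\mathbb Y^\tau)={\sf D}^{-1}\mathbb I$; (e) $S(\mathbb G)S(\mathbb F^\tau)={\sf D}^{-1}\mathbb I$, and consequently $S(\mathbb F^\tau)\,{\sf D}\mathbb I=\mathbb G$; (f) $S^2(\mathbb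 Y)={\sf D}\mathbb I\cdot\mathbb G\cdot{\sf D}^{-1}\mathbb I$; (g) $\mathbb G=\alpha\mathbb Y\alpha^{-1}$.
   Context: A connected graded algebra $E$ is Frobenius if finite dimensional with a nondegenerate associative bilinear form of some degree; then the top nonzero degree $E_l$ is one-dimensional and multiplication gives nondegenerate pairings $E_i\times E_{l-i}\to E_l$, so the bases $\{b_i\},\{c_i\}$ exist uniquely. The element ${\sf D}$ (the homological codeterminant of the coaction) is grouplike, hence invertible with $S({\sf D})={\sf D}^{-1}$. Matrices have entries in $K$, are multiplied by $(XY)_{ij}=\sum_sX_{is}Y_{sj}$, $S(X)$ means applying $S$ entrywise, $X^\tau$ is the transpose, and ${\sf D}\mathbb I$ is the diagonal matrix with entries ${\sf D}$. *)

(* Defs.v *)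
From HB Require Import structures.
From mathcomp Require Import all_boot all_order all_algebra all_field.
Set Implicit Arguments. Unset Strict Implicit. Unset Printing Implicit Defensive.
Import GRing.Theory.
Local Open Scope ring_scope.

(* Tensor products over a field k, presented by the universal property.   *)
(* An element of A (x) B is written as a formal finite sum                 *)
(* sum_(p <- s) p.1 (x) p.2, with s : seq (A * B); two formal sums denote *)
(* the same tensor iff every bilinear map out of A x B (into any k-vector *)
(* space V) takes the same value on them.  Likewise for A (x) B (x) C.     *)

Definition bilinear_map (k : fieldType) (A B V : lmodType k)
  (phi : A -> B -> V) : Prop :=
  (forall (c : k) x y z, phi (c *: x + y) z = c *: phi x z + phi y z) /\
  (forall (c : k) x y z, phi z (c *: x + y) = c *: phi z x + phi z y).

Definition trilinear_map (k : fieldType) (A B C V : lmodType k)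
  (phi : A -> B -> C -> V) : Prop :=
  (forall (c : k) x y u w, phi (c *: x + y) u w = c *: phi x u w + phi y u w) /\
  (forall (c : k) x y u w, phi u (c *: x + y) w = c *: phi u x w + phi u y w) /\
  (forall (c : k) x y u w, phi u w (c *: x + y) = c *: phi u w x + phi u w y).

Definition tensor_eq (k : fieldType) (A B : lmodType k) (s t : seq (A * B)) : Prop :=
  forall (V : lmodType k) (phi : A -> B -> V), bilinear_map phi ->
    \sum_(p <- s) phi p.1 p.2 = \sum_(p <- t) phi p.1 p.2.

Definition tensor3_eq (k : fieldType) (A B C : lmodType k)
  (s t : seq (A * B * C)) : Prop :=
  forall (V : lmodType k) (phi : A -> B -> C -> V), trilinear_map phi ->
    \sum_(p <- s) phi p.1.1 p.1.2 p.2 = \sum_(p <- t) phi p.1.1 p.1.2 p.2.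

Definition hopf_algebra (k : fieldType) (K : algType k)
  (Delta : K -> seq (K * K)) (eps : K -> k) (S : K -> K) : Prop :=
  (forall (c : k) (x y : K),
     tensor_eq (Delta (c *: x + y))
               ([seq (c *: p.1, p.2) | p <- Delta x] ++ Delta y)) /\
  (forall x y : K,
     tensor_eq (Delta (x * y))
               [seq (p.1 * q.1, p.2 * q.2) | p <- Delta x, q <- Delta y]) /\
  tensor_eq (Delta 1) [:: (1, 1)] /\
  (forall x : K,
     tensor3_eq [seq (q.1, q.2, p.2) | p <- Delta x, q <- Delta p.1]
                [seq (p.1, q.1, q.2) | p <- Delta x, q <- Delta p.2]) /\
  (forall (c : k) (x y : K), eps (c *: x + y) = c * eps x + eps y) /\
  (forall x y : K, eps (x * y) = eps x * eps y) /\
  eps 1 = 1 /\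
  (forall x : K, \sum_(p <- Delta x) eps p.1 *: p.2 = x) /\
  (forall x : K, \sum_(p <- Delta x) eps p.2 *: p.1 = x) /\
  (forall (c : k) (x y : K), S (c *: x + y) = c *: S x + S y) /\
  (forall x : K, \sum_(p <- Delta x) S p.1 * p.2 = (eps x)%:A) /\
  (forall x : K, \sum_(p <- Delta x) p.1 * S p.2 = (eps x)%:A).

Definition comodule_algebra (k : fieldType) (K : algType k)
  (Delta : K -> seq (K * K)) (eps : K -> k) (E : falgType k)
  (rho : E -> seq (K * E)) : Prop :=
  (forall (c : k) (x y : E),
     tensor_eq (rho (c *: x + y))
               ([seq (c *: p.1, p.2) | p <- rho x] ++ rho y)) /\
  (forall x : E,
     tensor3_eq [seq (q.1, q.2, p.2) | p <- rho x, q <- Delta p.1]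
                [seq (p.1, q.1, q.2) | p <- rho x, q <- rho p.2]) /\
  (forall x : E, \sum_(p <- rho x) eps p.1 *: p.2 = x) /\
  (forall x y : E,
     tensor_eq (rho (x * y))
               [seq (p.1 * q.1, p.2 * q.2) | p <- rho x, q <- rho y]) /\
  tensor_eq (rho 1) [:: (1, 1)].

Definition graded_algebra (k : fieldType) (E : falgType k)
  (Egr : nat -> {vspace E}) : Prop :=
  (exists N : nat,
     (forall i, (N < i)%N -> Egr i = 0%VS) /\
     directv (\sum_(i < N.+1) Egr i) /\
     (\sum_(i < N.+1) Egr i)%VS = fullv) /\
  (forall i j (x y : E), x \in Egr i -> y \in Egr j -> x * y \in Egr (i + j)).

Definition connected_graded (k : fieldType) (E : falgType k)
  (Egr : nat -> {vspace E}) : Prop :=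
  graded_algebra Egr /\ Egr 0 = <[1]>%VS.

Definition graded_frobenius (k : fieldType) (E : falgType k)
  (Egr : nat -> {vspace E}) : Prop :=
  exists (form : E -> E -> k) (d : nat),
    (forall (c : k) x y z, form (c *: x + y) z = c * form x z + form y z) /\
    (forall (c : k) x y z, form z (c *: x + y) = c * form z x + form z y) /\
    (forall x y z, form (x * y) z = form x (y * z)) /\
    (forall x, (forall y, form x y = 0) -> x = 0) /\
    (forall y, (forall x, form x y = 0) -> y = 0) /\
    (forall i j x y, x \in Egr i -> y \in Egr j -> i + j <> d -> form x y = 0).

Definition top_degree (k : fieldType) (E : falgType k)
  (Egr : nat -> {vspace E}) (l : nat) : Prop :=
  Egr l <> 0%VS /\ (forall i, (l < i)%N -> Egr i = 0%VS).

Definition grading_preserving (k : fieldType) (K : algType k) (E : falgType k)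
  (Egr : nat -> {vspace E}) (rho : E -> seq (K * E)) : Prop :=
  forall i (x : E), x \in Egr i ->
    exists s : seq (K * E), tensor_eq (rho x) s /\ all (fun p => p.2 \in Egr i) s.

(* Main.v *)
Require Import Defs.
From HB Require Import structures.
From mathcomp Require Import all_boot all_order all_algebra all_field.
Import GRing.Theory.
Local Open Scope ring_scope.
Set Implicit Arguments. Unset Strict Implicit. Unset Printing Implicit Defensive.


Lemma coordfun (k : fieldType) (E : vectType k) m (X : 'I_m -> E) :
  free [seq X i | i <- enum 'I_m] ->
  exists f : 'I_m -> E -> k,
   [/\ (forall i c x y, f i (c*:x+y) = c * f i x + f i y),
       (forall i j, f i (X j) = (j == i)%:R) &
       (forall v, v \in <<[seq X i | i <- enum 'I_m]>>%VS -> v = \sum_i f i v *: X i)].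
Proof.
set T := [tuple X i | i < m].
have eT : (T : seq E) = [seq X i | i <- enum 'I_m].
  by rewrite /T /mktuple /=.
have nT (i : 'I_m) : T`_i = X i by rewrite -tnth_nth tnth_mktuple.
move=> fr; rewrite -eT in fr *.
exists (fun i => coord T i); split.
- by move=> i c x y; rewrite linearD linearZ.
- by move=> i j; rewrite -nT coord_free.
- by move=> v /coord_span {1}->; apply: eq_bigr => i _; rewrite nT.
Qed.

Lemma dbl0 (V : zmodType) (x : V) : x = x + x -> x = 0.
Proof. by move=> h; have := congr1 (fun v => v - x) h; rewrite addrK subrr. Qed.

Section Bil.
Variable k : fieldType.
Implicit Types A B C D V : lmodType k.

Lemma bil0l A B V (phi : A -> B -> V) z : bilinear_map phi -> phi 0 z = 0.
Proof.
move=> [H _]; have := H 1 0 0 z; rewrite !scale1r addr0; exact: dbl0.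
Qed.
Lemma bil0r A B V (phi : A -> B -> V) z : bilinear_map phi -> phi z 0 = 0.
Proof.
move=> [_ H]; have := H 1 0 0 z; rewrite !scale1r addr0; exact: dbl0.
Qed.
Lemma bilZl A B V (phi : A -> B -> V) c x z : bilinear_map phi -> phi (c *: x) z = c *: phi x z.
Proof. by move=> hp; have := hp.1 c x 0 z; rewrite addr0 bil0l // addr0. Qed.
Lemma bilZr A B V (phi : A -> B -> V) c x z : bilinear_map phi -> phi z (c *: x) = c *: phi z x.
Proof. by move=> hp; have := hp.2 c x 0 z; rewrite addr0 bil0r // addr0. Qed.
Lemma bilDl A B V (phi : A -> B -> V) x y z : bilinear_map phi -> phi (x + y) z = phi x z + phi y z.
Proof. by move=> hp; have := hp.1 1 x y z; rewrite !scale1r. Qed.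
Lemma bilDr A B V (phi : A -> B -> V) x y z : bilinear_map phi -> phi z (x + y) = phi z x + phi z y.
Proof. by move=> hp; have := hp.2 1 x y z; rewrite !scale1r. Qed.
Lemma bil_suml A B V (phi : A -> B -> V) I (r : seq I) (F : I -> A) z : bilinear_map phi ->
  phi (\sum_(i <- r) F i) z = \sum_(i <- r) phi (F i) z.
Proof.
move=> hp; elim: r => [|x r IH]; first by rewrite !big_nil bil0l.
by rewrite !big_cons bilDl // IH.
Qed.
Lemma bil_sumr A B V (phi : A -> B -> V) I (r : seq I) (F : I -> B) z : bilinear_map phi ->
  phi z (\sum_(i <- r) F i) = \sum_(i <- r) phi z (F i).
Proof.
move=> hp; elim: r => [|x r IH]; first by rewrite !big_nil bil0r.
by rewrite !big_cons bilDr // IH.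
Qed.

Lemma sum_bil A B V I (r : seq I) (F : I -> A -> B -> V) :
  (forall i, bilinear_map (F i)) -> bilinear_map (fun x y => \sum_(i <- r) F i x y).
Proof.
move=> hF; split=> c x y z.
- rewrite scaler_sumr -big_split /=; apply: eq_bigr => i _; exact: (hF i).1.
- rewrite scaler_sumr -big_split /=; apply: eq_bigr => i _; exact: (hF i).2.
Qed.

Definition lin A B (L : A -> B) := forall c x y, L (c *: x + y) = c *: L x + L y.

Lemma bil_comp A B (A' B' : lmodType k) V (phi : A -> B -> V) (L1 : A' -> A) (L2 : B' -> B) :
  bilinear_map phi -> lin L1 -> lin L2 -> bilinear_map (fun x y => phi (L1 x) (L2 y)).
Proof.
move=> hp h1 h2; split=> c x y z.
- by rewrite h1 hp.1.
- by rewrite h2 hp.2.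
Qed.

Definition tlin A B C (f : A -> seq (B * C)) := forall c x y,
  tensor_eq (f (c *: x + y)) ([seq (c *: p.1, p.2) | p <- f x] ++ f y).

Lemma tlin_sum A B C V (f : A -> seq (B * C)) (phi : B -> C -> V) c x y :
  tlin f -> bilinear_map phi ->
  \sum_(p <- f (c *: x + y)) phi p.1 p.2 =
   c *: \sum_(p <- f x) phi p.1 p.2 + \sum_(p <- f y) phi p.1 p.2.
Proof.
move=> hf hp; rewrite (hf c x y V phi hp) big_cat big_map /= scaler_sumr.
by congr (_ + _); apply: eq_bigr => p _; rewrite bilZl.
Qed.

Lemma tlin_lin A B C V (f : A -> seq (B * C)) (phi : B -> C -> V) :
  tlin f -> bilinear_map phi -> lin (fun x => \sum_(p <- f x) phi p.1 p.2).
Proof. by move=> hf hp c x y; apply: tlin_sum. Qed.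

Lemma lin0 A B (L : A -> B) : lin L -> L 0 = 0.
Proof.
move=> hL; have := hL 1 0 0; rewrite !scale1r addr0; exact: dbl0.
Qed.
Lemma linZ A B (L : A -> B) c x : lin L -> L (c *: x) = c *: L x.
Proof. by move=> hL; have := hL c x 0; rewrite addr0 lin0 // addr0. Qed.
Lemma linD A B (L : A -> B) x y : lin L -> L (x + y) = L x + L y.
Proof. by move=> hL; have := hL 1 x y; rewrite !scale1r. Qed.
Lemma lin_sum A B (L : A -> B) I (r : seq I) (F : I -> A) : lin L ->
  L (\sum_(i <- r) F i) = \sum_(i <- r) L (F i).
Proof.
move=> hL; elim: r => [|x r IH]; first by rewrite !big_nil lin0.
by rewrite !big_cons linD // IH.
Qed.

Lemma nest1 A B C D V (f : A -> seq (B * C)) (phi : B -> C -> D -> V)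
  (s t : seq (A * D)) :
  tlin f -> trilinear_map phi -> tensor_eq s t ->
  \sum_(p <- s) \sum_(q <- f p.1) phi q.1 q.2 p.2 =
  \sum_(p <- t) \sum_(q <- f p.1) phi q.1 q.2 p.2.
Proof.
move=> hf [h1 [h2 h3]] hst.
apply: (hst V (fun u w => \sum_(q <- f u) phi q.1 q.2 w)); split=> c x y z.
- have hb : bilinear_map (fun a b => phi a b z).
    by split=> c' x' y' z'; [exact: h1 | exact: h2].
  exact: (tlin_sum c x y hf hb).
- rewrite scaler_sumr -big_split /=; apply: eq_bigr => q _; exact: h3.
Qed.

Lemma nest2 A B C D V (f : A -> seq (B * C)) (phi : D -> B -> C -> V)
  (s t : seq (D * A)) :
  tlin f -> trilinear_map phi -> tensor_eq s t ->
  \sum_(p <- s) \sum_(q <- f p.2) phi p.1 q.1 q.2 =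
  \sum_(p <- t) \sum_(q <- f p.2) phi p.1 q.1 q.2.
Proof.
move=> hf [h1 [h2 h3]] hst.
apply: (hst V (fun w u => \sum_(q <- f u) phi w q.1 q.2)); split=> c x y z.
- rewrite scaler_sumr -big_split /=; apply: eq_bigr => q _; exact: h1.
- have hb : bilinear_map (fun a b => phi z a b).
    by split=> c' x' y' z'; [exact: h2 | exact: h3].
  exact: (tlin_sum c x y hf hb).
Qed.

End Bil.

Section Mat.
Variable k : fieldType.

Definition flin (E : lmodType k) (f : E -> k) := forall c x y, f (c *: x + y) = c * f x + f y.

Lemma flin0 (E : lmodType k) (f : E -> k) : flin f -> f 0 = 0.
Proof. by move=> hf; have := hf 1 0 0; rewrite !scale1r mul1r addr0; exact: dbl0. Qed.

Lemma flin_sum (E : lmodType k) (f : E -> k) I (r : seq I) (c : I -> k) (v : I -> E) :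
  flin f -> f (\sum_(i <- r) c i *: v i) = \sum_(i <- r) c i * f (v i).
Proof.
move=> hf; elim: r => [|x r IH]; first by rewrite !big_nil flin0.
by rewrite !big_cons hf IH.
Qed.

Lemma sum_delta (V : lmodType k) n (j : 'I_n) (F : 'I_n -> V) :
  \sum_s ((s == j)%:R *: F s) = F j.
Proof.
rewrite (bigD1 j) //= eqxx scale1r big1 ?addr0 // => s /negbTE ->.
by rewrite scale0r.
Qed.

Lemma sum_deltak n (j : 'I_n) (F : 'I_n -> k) :
  \sum_s (F s * (s == j)%:R) = F j.
Proof.
rewrite (bigD1 j) //= eqxx mulr1 big1 ?addr0 // => s /negbTE ->.
by rewrite mulr0.
Qed.

Lemma bil_fun (K E V : lmodType k) (f : E -> k) (L : K -> V) :
  flin f -> lin L -> bilinear_map (fun u v => f v *: L u).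
Proof.
move=> hf hL; split=> c x y z.
- by rewrite hL scalerDr !scalerA mulrC.
- by rewrite hf scalerDl scalerA.
Qed.

Lemma tri_fun (K E V : lmodType k) (f : E -> k) (psi : K -> K -> V) :
  flin f -> bilinear_map psi -> trilinear_map (fun u v w => f w *: psi u v).
Proof.
move=> hf [h1 h2]; split; [|split] => c x y u w.
- by rewrite h1 scalerDr !scalerA mulrC.
- by rewrite h2 scalerDr !scalerA mulrC.
- by rewrite hf scalerDl scalerA.
Qed.

Lemma extract (K E : lmodType k) n (X : 'I_n -> E) (fX : 'I_n -> E -> k) (u v : 'I_n -> K) :
  (forall i, flin (fX i)) -> (forall i j, fX i (X j) = (j == i)%:R) ->
  tensor_eq [seq (u s, X s) | s <- enum 'I_n] [seq (v s, X s) | s <- enum 'I_n] ->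
  forall j, u j = v j.
Proof.
move=> hl hd h j.
have hb : bilinear_map (fun a b => fX j b *: (a : K)).
  by apply: bil_fun => // c x y.
have := h _ _ hb; rewrite !big_map.
under eq_bigr do rewrite hd; under [in RHS]eq_bigr do rewrite hd.
by rewrite !sum_delta.
Qed.

Lemma matcoalg (K E : lmodType k) (Delta : K -> seq (K * K)) (eps : K -> k)
  (rho : E -> seq (K * E)) n (X : 'I_n -> E) (fX : 'I_n -> E -> k) (M : 'M[K]_n) :
  tlin Delta -> tlin rho ->
  (forall x : E,
     tensor3_eq [seq (q.1, q.2, p.2) | p <- rho x, q <- Delta p.1]
                [seq (p.1, q.1, q.2) | p <- rho x, q <- rho p.2]) ->
  (forall x : E, \sum_(p <- rho x) eps p.1 *: p.2 = x) ->
  flin eps ->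
  (forall i, flin (fX i)) -> (forall i j, fX i (X j) = (j == i)%:R) ->
  (forall i, tensor_eq (rho (X i)) [seq (M i s, X s) | s <- enum 'I_n]) ->
  (forall i j, tensor_eq (Delta (M i j)) [seq (M i s, M s j) | s <- enum 'I_n]) /\
  (forall i j, eps (M i j) = (i == j)%:R).
Proof.
move=> hD hr hco hcu he hl hd hX; split.
- move=> i j V psi hpsi.
  have ht := tri_fun (hl j) hpsi.
  have := hco (X i) V _ ht; rewrite !big_allpairs_dep /=.
  rewrite (nest1 hD ht (hX i)) (nest2 hr ht (hX i)) !big_map /=.
  under eq_bigr do (under eq_bigr do rewrite hd; rewrite -scaler_sumr).
  rewrite sum_delta => ->.
  apply: eq_bigr => s _.
  have hL : lin (psi (M i s)) by move=> c x y; exact: hpsi.2.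
  rewrite (hX s V _ (bil_fun (hl j) hL)).
  rewrite big_map big_enum /=.
  by under eq_bigr do rewrite hd; rewrite sum_delta.
- move=> i j.
  have hb : bilinear_map (fun u (v : E) => eps u *: v).
    split=> c x y z; first by rewrite he scalerDl scalerA.
    by rewrite scalerDr !scalerA mulrC.
  have := hcu (X i); rewrite (hX i _ _ hb) big_map big_enum /= => /(congr1 (fX j)).
  rewrite flin_sum // hd; under eq_bigr do rewrite hd; by rewrite sum_deltak.
Qed.

End Mat.

Section Alg.
Variable k : fieldType.

Lemma tensor_eq_sym (A B : lmodType k) (s t : seq (A * B)) : tensor_eq s t -> tensor_eq t s.
Proof. by move=> h V phi hp; rewrite (h V phi hp). Qed.
Lemma tensor_eq_trans (A B : lmodType k) (s t u : seq (A * B)) :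
  tensor_eq s t -> tensor_eq t u -> tensor_eq s u.
Proof. by move=> h1 h2 V phi hp; rewrite (h1 V phi hp) (h2 V phi hp). Qed.
Lemma tensor_eq_refl (A B : lmodType k) (s : seq (A * B)) : tensor_eq s s.
Proof. by []. Qed.

Lemma lin_mulr (A : algType k) (z : A) : lin (fun x : A => x * z).
Proof. by move=> c x y; rewrite mulrDl scalerAl. Qed.
Lemma lin_mull (A : algType k) (z : A) : lin (fun x : A => z * x).
Proof. by move=> c x y; rewrite mulrDr scalerAr. Qed.
Lemma lin_id (A : lmodType k) : lin (fun x : A => x).
Proof. by []. Qed.
Lemma bil_mul (A : algType k) : bilinear_map (fun x y : A => x * y).
Proof. by split=> c x y z; [rewrite mulrDl scalerAl | rewrite mulrDr scalerAr]. Qed.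

Lemma tsc (A B C : lmodType k) (f : A -> seq (B * C)) x s c :
  tlin f -> tensor_eq (f x) s -> tensor_eq (f (c *: x)) [seq (c *: p.1, p.2) | p <- s].
Proof.
move=> hf hs V phi hp; have := tlin_sum c x 0 hf hp; rewrite addr0 => ->.
rewrite (lin0 (tlin_lin hf hp)) addr0 (hs V phi hp) big_map scaler_sumr.
by apply: eq_bigr => p _; rewrite /= bilZl.
Qed.

Lemma tmul (X A B : algType k) (f : X -> seq (A * B)) x y s t :
  (forall x y, tensor_eq (f (x * y)) [seq (p.1 * q.1, p.2 * q.2) | p <- f x, q <- f y]) ->
  tensor_eq (f x) s -> tensor_eq (f y) t ->
  tensor_eq (f (x * y)) [seq (p.1 * q.1, p.2 * q.2) | p <- s, q <- t].
Proof.
move=> hm hs ht V phi hp; rewrite (hm x y V phi hp) !big_allpairs_dep /=.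
have hb : bilinear_map (fun u v => \sum_(q <- f y) phi (u * q.1) (v * q.2)).
  by apply: sum_bil => q; apply: bil_comp => //; apply: lin_mulr.
rewrite (hs V _ hb); apply: eq_bigr => p _.
have hb' : bilinear_map (fun u v => phi (p.1 * u) (p.2 * v)).
  by apply: bil_comp => //; apply: lin_mull.
exact: (ht V _ hb').
Qed.

Lemma matS (K : algType k) (Delta : K -> seq (K * K)) (eps : K -> k) (S : K -> K)
  n (M : 'M[K]_n) :
  lin S ->
  (forall x : K, \sum_(p <- Delta x) S p.1 * p.2 = (eps x)%:A) ->
  (forall x : K, \sum_(p <- Delta x) p.1 * S p.2 = (eps x)%:A) ->
  (forall i j, tensor_eq (Delta (M i j)) [seq (M i s, M s j) | s <- enum 'I_n]) ->
  (forall i j, eps (M i j) = (i == j)%:R) ->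
  map_mx S M *m M = 1%:M /\ M *m map_mx S M = 1%:M.
Proof.
move=> hS h1 h2 hD he; split; apply/matrixP => i j; rewrite !mxE.
- have hb : bilinear_map (fun u v : K => S u * v).
    by apply: (bil_comp (bil_mul K)) => //; apply: lin_id.
  have := h1 (M i j); rewrite (hD i j _ _ hb) big_map he => h.
  rewrite -scaler_nat -h big_enum; apply: eq_bigr => s _; by rewrite !mxE.
- have hb : bilinear_map (fun u v : K => u * S v).
    by apply: (bil_comp (bil_mul K)) => //; apply: lin_id.
  have := h2 (M i j); rewrite (hD i j _ _ hb) big_map he => h.
  rewrite -scaler_nat -h big_enum; apply: eq_bigr => s _; by rewrite !mxE.
Qed.

Lemma pairing (K : algType k) (E : algType k) (rho : E -> seq (K * E)) e D (fe : E -> k)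
  n (P Q : 'I_n -> E) (MP MQ : 'M[K]_n) :
  tlin rho ->
  (forall x y, tensor_eq (rho (x * y)) [seq (p.1 * q.1, p.2 * q.2) | p <- rho x, q <- rho y]) ->
  flin fe -> fe e = 1 ->
  (forall i j, P i * Q j = (i == j)%:R *: e) ->
  tensor_eq (rho e) [:: (D, e)] ->
  (forall i, tensor_eq (rho (P i)) [seq (MP i s, P s) | s <- enum 'I_n]) ->
  (forall i, tensor_eq (rho (Q i)) [seq (MQ i s, Q s) | s <- enum 'I_n]) ->
  MP *m MQ^T = D%:M.
Proof.
move=> hl hm hf hfe hPQ he hP hQ; apply/matrixP => i j; rewrite !mxE.
have hb : bilinear_map (fun (u : K) (v : E) => fe v *: u) by apply: bil_fun.
have := tmul hm (hP i) (hQ j) hb.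
rewrite hPQ (tsc (i == j)%:R hl he hb) !big_allpairs_dep /= big_cons big_nil addr0 /=.
rewrite hfe scale1r => h; rewrite -scaler_nat h.
rewrite big_map big_enum; apply: eq_bigr => s _.
rewrite big_map big_enum /= (bigD1 s) //= big1 ?addr0.
  by rewrite !mxE hPQ eqxx scale1r hfe scale1r.
move=> t /negbTE hts; rewrite hPQ eq_sym hts scale0r flin0 // scale0r //.
Qed.

End Alg.

Section Grp.
Variable k : fieldType.

Lemma grp_inv (K : algType k) (Delta : K -> seq (K * K)) (eps : K -> k) (S : K -> K) (D : K) :
  lin S ->
  (forall x y : K, tensor_eq (Delta (x * y)) [seq (p.1 * q.1, p.2 * q.2) | p <- Delta x, q <- Delta y]) ->
  tensor_eq (Delta 1) [:: (1, 1)] ->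
  (forall x y : K, eps (x * y) = eps x * eps y) -> eps 1 = 1 ->
  (forall x : K, \sum_(p <- Delta x) S p.1 * p.2 = (eps x)%:A) ->
  (forall x : K, \sum_(p <- Delta x) p.1 * S p.2 = (eps x)%:A) ->
  tensor_eq (Delta D) [:: (D, D)] -> eps D = 1 ->
  [/\ S D * D = 1, D * S D = 1, eps (S D) = 1 & tensor_eq (Delta (S D)) [:: (S D, S D)]].
Proof.
move=> hS hDm hD1 hem he1 hS1 hS2 hDD heD.
have hb1 : bilinear_map (fun u v : K => S u * v).
  by apply: (bil_comp (bil_mul K)) => //; apply: lin_id.
have hb2 : bilinear_map (fun u v : K => u * S v).
  by apply: (bil_comp (bil_mul K)) => //; apply: lin_id.
have h1 : S D * D = 1.
  by have := hS1 D; rewrite (hDD _ _ hb1) big_cons big_nil addr0 /= heD scale1r.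
have h2 : D * S D = 1.
  by have := hS2 D; rewrite (hDD _ _ hb2) big_cons big_nil addr0 /= heD scale1r.
split => //.
  by have := hem D (S D); rewrite h2 he1 heD mul1r.
move=> V phi hp; set w := S D.
have hb : bilinear_map (fun u v => phi (w * u) (w * v)).
  by apply: bil_comp => //; apply: lin_mull.
have := tmul hDm hDD (tensor_eq_refl (Delta w)) hb.
rewrite h2 (hD1 _ _ hb) big_allpairs_dep !big_cons !big_nil !addr0 /= !mulr1 => ->.
by rewrite addr0; apply: eq_bigr => q _; rewrite !mulrA h1 !mul1r.
Qed.

Lemma Santi (K : algType k) (Delta : K -> seq (K * K)) (eps : K -> k) (S : K -> K) (z w : K) :
  lin S -> flin eps ->
  (forall x y : K, tensor_eq (Delta (x * y)) [seq (p.1 * q.1, p.2 * q.2) | p <- Delta x, q <- Delta y]) ->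
  (forall x : K,
     tensor3_eq [seq (q.1, q.2, p.2) | p <- Delta x, q <- Delta p.1]
                [seq (p.1, q.1, q.2) | p <- Delta x, q <- Delta p.2]) ->
  (forall x y : K, eps (x * y) = eps x * eps y) ->
  (forall x : K, \sum_(p <- Delta x) eps p.1 *: p.2 = x) ->
  (forall x : K, \sum_(p <- Delta x) eps p.2 *: p.1 = x) ->
  (forall x : K, \sum_(p <- Delta x) S p.1 * p.2 = (eps x)%:A) ->
  (forall x : K, \sum_(p <- Delta x) p.1 * S p.2 = (eps x)%:A) ->
  tensor_eq (Delta z) [:: (z, z)] -> eps z = 1 -> z * w = 1 ->
  forall x, S (x * z) = w * S x.
Proof.
move=> hS he hDm hco hem hc1 hc2 hS1 hS2 hDz hez hzw x.
set T := fun u => S (u * z).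
have hT : lin T by move=> c u v; rewrite /T mulrDl -scalerAl hS.
have hb1 : bilinear_map (fun u v : K => S u * v).
  by apply: (bil_comp (bil_mul K)) => //; apply: lin_id.
have step a : \sum_(p <- Delta a) T p.1 * p.2 = eps a *: w.
  have := hS1 (a * z); rewrite (tmul hDm (tensor_eq_refl (Delta a)) hDz hb1).
  rewrite big_allpairs_dep /= hem hez mulr1 => h.
  rewrite -mulr_algl -h mulr_suml; apply: eq_bigr => p _.
  by rewrite big_cons big_nil addr0 /= -!mulrA hzw mulr1.
have ht : trilinear_map (fun u v r : K => T u * v * S r).
  split; [|split] => c u v a b.
  - by rewrite hT !mulrDl -!scalerAl.
  - by rewrite mulrDr mulrDl -scalerAr -scalerAl.
  - by rewrite hS mulrDr -scalerAr.
have := hco x K _ ht; rewrite !big_allpairs_dep /=.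
have -> : \sum_(p <- Delta x) \sum_(q <- Delta p.1) T q.1 * q.2 * S p.2 = w * S x.
  rewrite -[X in w * S X](hc1 x) lin_sum // mulr_sumr; apply: eq_bigr => p _.
  by rewrite -mulr_suml step linZ // -scalerAl scalerAr.
move=> ->.
rewrite -/(T x); rewrite -{1}(hc2 x) lin_sum //; apply: eq_bigr => p _.
under eq_bigr do rewrite -mulrA.
by rewrite -mulr_sumr hS2 mulr_algr linZ.
Qed.

End Grp.

Lemma mx_scal_r (R : pzSemiRingType) n (A : 'M[R]_n) d i j : (A *m d%:M) i j = A i j * d.
Proof.
rewrite mxE (bigD1 j) //= mxE eqxx mulr1n big1 ?addr0 // => s ne.
by rewrite mxE (negbTE ne) mulr0n mulr0.
Qed.
Lemma mx_scal_l (R : pzSemiRingType) n (A : 'M[R]_n) d i j : (d%:M *m A) i j = d * A i j.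
Proof.
rewrite mxE (bigD1 i) //= mxE eqxx mulr1n big1 ?addr0 // => s ne.
by rewrite mxE eq_sym (negbTE ne) mulr0n mul0r.
Qed.

Unset Implicit Arguments.

Theorem lemma3p1 (k : fieldType) (K : algType k)
  (Delta : K -> seq (K * K)) (eps : K -> k) (S : K -> K)
  (E : falgType k) (Egr : nat -> {vspace E}) (l n : nat)
  (e : E) (a b c : 'I_n -> E) (alpha : 'M[k]_n)
  (rho : E -> seq (K * E)) (Y F G : 'M[K]_n) (D : K) :
  hopf_algebra Delta eps S ->
  connected_graded Egr ->
  graded_frobenius Egr ->
  top_degree Egr l ->
  basis_of (Egr l) [:: e] ->
  basis_of (Egr 1%N) [seq a i | i <- enum 'I_n] ->
  basis_of (Egr l.-1) [seq b i | i <- enum 'I_n] ->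
  (forall i j, a i * b j = (i == j)%:R *: e) ->
  basis_of (Egr 1%N) [seq c i | i <- enum 'I_n] ->
  (forall i j, b i * c j = (i == j)%:R *: e) ->
  (forall i, c i = \sum_j alpha i j *: a j) ->
  comodule_algebra Delta eps rho ->
  grading_preserving Egr rho ->
  (forall i, tensor_eq (rho (a i)) [seq (Y i s, a s) | s <- enum 'I_n]) ->
  (forall i, tensor_eq (rho (b i)) [seq (F i s, b s) | s <- enum 'I_n]) ->
  (forall i, tensor_eq (rho (c i)) [seq (G i s, c s) | s <- enum 'I_n]) ->
  tensor_eq (rho e) [:: (D, e)] ->
  exists Dinv : K, D * Dinv = 1 /\ Dinv * D = 1 /\
    (* (a) *) (Y *m map_mx S Y = 1%:M /\ map_mx S Y *m Y = 1%:M) /\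
    (* (b) *) (G *m map_mx S G = 1%:M /\ map_mx S G *m G = 1%:M) /\
    (* (c) *) (Y *m F^T = D%:M /\ map_mx S Y = F^T *m Dinv%:M) /\
    (* (d) *) map_mx S F *m map_mx S Y^T = Dinv%:M /\
    (* (e) *) (map_mx S G *m map_mx S F^T = Dinv%:M /\
               map_mx S F^T *m D%:M = G) /\
    (* (f) *) map_mx (fun x => S (S x)) Y = D%:M *m G *m Dinv%:M /\
    (* (g) *) G = map_mx (fun x : k => x%:A) alpha *m Y
                    *m map_mx (fun x : k => x%:A) (invmx alpha).

Proof.
move=> hH hcg hfr htop hbe hba hbb hab hbc hbcE hcal hcom hgp hY hF hG hD.
case: hH => hDl [hDm [hD1 [hDco [hel [hem [he1 [hcu1 [hcu2 [hSl [hS1 hS2]]]]]]]]]].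
case: hcom => hrl [hrco [hrcu [hrm hr1]]].
have e1 : enum 'I_1 = [:: ord0] by rewrite enum_ordSl enum_ord0.
have fre : free [seq (fun _ : 'I_1 => e) i | i <- enum 'I_1].
  by rewrite e1 /=; exact: basis_free hbe.
have [fe [hfel hfed _]] := coordfun fre.
have [fa [hfal hfad hfas]] := coordfun (basis_free hba).
have [fb [hfbl hfbd _]] := coordfun (basis_free hbb).
have [fc [hfcl hfcd hfcs]] := coordfun (basis_free hbc).
have hfe1 : fe ord0 e = 1 by have := hfed ord0 ord0; rewrite eqxx.
have hDe : forall i, tensor_eq (rho ((fun _ : 'I_1 => e) i))
    [seq ((const_mx D : 'M[K]_1) i s, (fun _ : 'I_1 => e) s) | s <- enum 'I_1].
  by move=> i; rewrite e1 /= !mxE.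
have [hDD0 heD0] := matcoalg hDl hrl hrco hrcu hel hfel hfed hDe.
have hDD : tensor_eq (Delta D) [:: (D, D)].
  by have := hDD0 ord0 ord0; rewrite e1 /= !mxE.
have heD : eps D = 1 by have := heD0 ord0 ord0; rewrite !mxE eqxx.
have [hDY heY] := matcoalg hDl hrl hrco hrcu hel hfal hfad hY.
have [hDF heF] := matcoalg hDl hrl hrco hrcu hel hfbl hfbd hF.
have [hDG heG] := matcoalg hDl hrl hrco hrcu hel hfcl hfcd hG.
have [hSYY hYSY] := matS hSl hS1 hS2 hDY heY.
have [hSFF hFSF] := matS hSl hS1 hS2 hDF heF.
have [hSGG hGSG] := matS hSl hS1 hS2 hDG heG.
have [hSDD hDSD heSD hDSD'] := grp_inv hSl hDm hD1 hem he1 hS1 hS2 hDD heD.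
have hYF : Y *m F^T = D%:M := pairing hrl hrm (hfel ord0) hfe1 hab hD hY hF.
have hFG : F *m G^T = D%:M := pairing hrl hrm (hfel ord0) hfe1 hbcE hD hF hG.
set Dinv := S D.
have hSanti := Santi (z := Dinv) (w := D) hSl hel hDm hDco hem hcu1 hcu2 hS1 hS2 hDSD' heSD hSDD.
have hFT : F^T = map_mx S Y *m D%:M by rewrite -hYF mulmxA hSYY mul1mx.
have hSY : map_mx S Y = F^T *m Dinv%:M by rewrite hFT -mulmxA -scalar_mxM hDSD mulmx1.
have hSYT : map_mx S Y^T = F *m Dinv%:M.
  apply/matrixP => i j; rewrite mx_scal_r !mxE.
  by have := congr1 (fun M : 'M[K]_n => M j i) hSY; rewrite /= mx_scal_r !mxE.
have hGT : G^T = map_mx S F *m D%:M by rewrite -hFG mulmxA hSFF mul1mx.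
have hSFTD : map_mx S F^T *m D%:M = G.
  apply/matrixP => i j; rewrite mx_scal_r !mxE.
  by have := congr1 (fun M : 'M[K]_n => M j i) hGT; rewrite /= mx_scal_r !mxE => ->.
have hSFT : map_mx S F^T = G *m Dinv%:M.
  by rewrite -hSFTD -mulmxA -scalar_mxM hDSD mulmx1.
exists Dinv; split; first exact: hDSD.
split; first exact: hSDD.
split; first by split.
split; first by split.
split; first by split.
split; first by rewrite hSYT mulmxA hSFF mul1mx.
split; first by split => //; rewrite hSFT mulmxA hSGG mul1mx.
split.
  apply/matrixP => i j; rewrite !mx_scal_r mx_scal_l !mxE.
  have := congr1 (fun M : 'M[K]_n => M i j) hSY; rewrite /= mx_scal_r mxE => ->.
  rewrite hSanti.
  have := congr1 (fun M : 'M[K]_n => M i j) hSFT; rewrite /= mx_scal_r !mxE => ->.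
  by rewrite mulrA.
set aK := map_mx (fun x : k => x%:A) alpha.
set aiK := map_mx (fun x : k => x%:A) (invmx alpha).
have hfac : forall s t, fa t (c s) = alpha s t.
  move=> s t; rewrite hcal flin_sum //.
  under eq_bigr do rewrite hfad.
  by rewrite sum_deltak.
have hGa : G *m aK = aK *m Y.
  apply/matrixP => i t; rewrite !mxE.
  have hb : bilinear_map (fun (u : K) (v : E) => fa t v *: u) by apply: bil_fun.
  have hL := tlin_lin hrl hb.
  have hsum := lin_sum (index_enum 'I_n) (fun j => alpha i j *: a j) hL.
  have := hG i _ _ hb; rewrite hcal /=. rewrite /= in hsum. rewrite hsum big_map big_enum /= => h.
  under eq_bigr do rewrite mxE mulr_algr -hfac.
  rewrite -h; apply: eq_bigr => j _.
  have hz := linZ (alpha i j) (a j) hL; rewrite /= in hz.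
  rewrite hz (hY j _ _ hb) big_map big_enum /= mxE mulr_algl.
  congr (_ *: _).
  by under eq_bigr do rewrite hfad; rewrite sum_delta.
have hau : alpha \in unitmx.
  set beta := \matrix_(i, j) fc j (a i) : 'M[k]_n.
  suff : beta *m alpha = 1%:M by case/mulmx1_unit.
  apply/matrixP => i t; rewrite !mxE.
  have ai : a i \in <<[seq a i | i <- enum 'I_n]>>%VS.
    by apply: memv_span; apply: map_f; rewrite mem_enum.
  rewrite (span_basis hba) -(span_basis hbc) in ai.
  have := congr1 (fa t) (hfcs _ ai); rewrite hfad flin_sum // => ->.
  by apply: eq_bigr => j _; rewrite mxE hfac.
have haa : aK *m aiK = 1%:M.
  apply/matrixP => i t; rewrite !mxE.
  have := congr1 (fun M : 'M[k]_n => M i t) (mulmxV hau); rewrite !mxE => h.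
  rewrite -(scaler_nat (i == t) (1 : K)) -h scaler_suml; apply: eq_bigr => j _.
  by rewrite !mxE mulr_algl scalerA.
by rewrite -hGa -mulmxA haa mulmx1.
Qed.
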